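(* Let $\Gamma$ be a countable discrete group and $\mu$ a symmetric, generating probability measure on $\Gamma$. Let $f\in\ell^\infty(\Gamma)$ be real valued with $\|f\|_\infty\le1$ and $f*\mu=-f$, such that $\mathcal P^n_\mu(|f|)$ increases pointwise to $1$ as $n\to\infty$. Then there exists a group homomorphism $\chi:\Gamma\to\{\pm1\}$ with $\chi(h)=-1$ for all $h\in\operatorname{supp}(\mu)$; in particular $\chi*\mu=-\chi$.
   Context: $(f*\mu)(x)=\sum_{h\in\Gamma}\mu(h)f(xh)$, and $\mathcal P^n_\mu(f)(x)=\sum_h\mu^{*n}(h)f(xh)$. $\mu$ symmetric: $\mu(g)=\mu(g^{-1})$; generating: its support generates $\Gamma$ as a group. *)

(* Defs.v *)
From HB Require Import structures.
From mathcomp Require Import all_boot all_order all_algebra.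
From mathcomp Require Import monoid.
From mathcomp Require Import all_classical all_reals all_analysis.
Set Implicit Arguments. Unset Strict Implicit. Unset Printing Implicit Defensive.
Import Order.TTheory GRing.Theory Num.Theory.
Import numFieldNormedType.Exports.
Local Open Scope classical_set_scope.
Local Open Scope ring_scope.

Section Defs.
Variables (R : realType) (G : groupType).

(* Sum over the whole (countable) group of a real function, defined as
   (sum of positive part) - (sum of negative part), each as an esum.
   For absolutely summable g this is the usual sum. *)
Definition gsum (g : G -> R) : R :=
  fine (\esum_(h in [set: G]) (Num.max (g h) 0)%:E) -
  fine (\esum_(h in [set: G]) (Num.max (- g h) 0)%:E).

Definition conv_right (f mu : G -> R) (x : G) : R :=
  gsum (fun h => mu h * f (x * h)%g).

Definition conv_meas (mu nu : G -> R) (g : G) : R :=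
  gsum (fun h => mu h * nu (h^-1 * g)%g).

Fixpoint conv_pow (mu : G -> R) (n : nat) : G -> R :=
  match n with
  | 0%N => fun g => if g == 1%g then 1 else 0
  | n'.+1 => conv_meas (conv_pow mu n') mu
  end.

Definition markov_pow (mu : G -> R) (n : nat) (f : G -> R) (x : G) : R :=
  gsum (fun h => conv_pow mu n h * f (x * h)%g).

Definition prob_measure (mu : G -> R) : Prop :=
  (forall g, 0 <= mu g) /\ (\esum_(h in [set: G]) (mu h)%:E = 1%E).

Definition symmetric_meas (mu : G -> R) : Prop := forall g, mu g = mu (g^-1)%g.

Definition generating (mu : G -> R) : Prop :=
  forall H : set G,
    H 1%g ->
    (forall x y, H x -> H y -> H (x * y)%g) ->
    (forall x, H x -> H (x^-1)%g) ->
    [set h | mu h != 0] `<=` H ->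
    H = [set: G].

End Defs.

(* Main.v *)
Require Import Defs.
From HB Require Import structures.
From mathcomp Require Import all_boot all_order all_algebra.
From mathcomp Require Import monoid.
From mathcomp Require Import all_classical all_reals all_analysis.
From mathcomp Require Import ring lra.
Import Order.TTheory GRing.Theory Num.Theory.
Import numFieldNormedType.Exports.
Local Open Scope classical_set_scope.
Local Open Scope ring_scope.


Section Grp.
Context {G : groupType}.
Local Open Scope group_scope.

Definition prodl (l : seq G) : G := foldr (fun a b => a * b) 1 l.
Fixpoint invl (l : seq G) : seq G :=
  match l with [::] => [::] | a :: l' => invl l' ++ [:: a^-1] end.

Lemma prodl_cat l1 l2 : prodl (l1 ++ l2) = prodl l1 * prodl l2.
Proof. elim: l1 => [|a l IH] /=; first by rewrite mul1g. by rewrite IH mulgA. Qed.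

Lemma prodl_invl l : prodl (invl l) = (prodl l)^-1.
Proof.
elim: l => [|a l IH] /=; first by rewrite invg1.
by rewrite prodl_cat IH /= mulg1 invgM.
Qed.

Lemma size_invl l : size (invl l) = size l.
Proof. by elim: l => [|a l IH] //=; rewrite size_cat IH addn1. Qed.

Lemma all_invl (P : pred G) l : (forall a, P a -> P a^-1) -> all P l -> all P (invl l).
Proof.
move=> HP; elim: l => [|a l IH] //= /andP[Pa Pl].
by rewrite all_cat IH //= HP.
Qed.
End Grp.


Section Esum.
Variables (R : realType) (T : choiceType).
Local Open Scope ereal_scope.

Lemma esum_scale_le (S : set T) (c : R) (a : T -> \bar R) :
  (0 <= c)%R -> (forall i, 0 <= a i) ->
  \esum_(i in S) (c%:E * a i) <= c%:E * \esum_(i in S) a i.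
Proof.
move=> c0 a0; apply: ge_ereal_sup => _ [X [finX XS] <-].
rewrite fsbig_finite//= -ge0_sume_distrr; last by move=> i _; exact: a0.
have c0' : 0 <= c%:E by rewrite lee_fin.
apply: (lee_wpmul2l c0').
rewrite -fsbig_finite//; apply: ereal_sup_ubound; exists X => //.
Qed.

Lemma esum_swap (T2 : choiceType) (a : T -> T2 -> \bar R) :
  (forall i j, 0 <= a i j) ->
  \esum_(i in [set: T]) \esum_(j in [set: T2]) a i j =
  \esum_(j in [set: T2]) \esum_(i in [set: T]) a i j.
Proof.
move=> a0; rewrite !esum_esum//.
rewrite (reindex_esum ([set: T2] `*`` (fun=> [set: T])) _ (fun x => (x.2, x.1)))//.
split.
- by move=> [i j] _.
- by move=> [i1 i2] [j1 j2] _ _ /= [-> ->].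
- by move=> [i1 i2] _; exists (i2, i1).
Qed.

Lemma fine_le_self (E : \bar R) : 0 <= E -> (fine E)%:E <= E.
Proof. by case: E => //= r _; rewrite lee_fin. Qed.

End Esum.

Section Gs.
Variables (R : realType) (G : groupType).

Lemma gsum_ge0 (g : G -> R) : (forall h, 0 <= g h) ->
  gsum g = fine (\esum_(h in [set: G]) (g h)%:E).
Proof.
move=> g0; rewrite /gsum [X in _ - fine X]esum1 ?subr0.
  by congr fine; apply: eq_esum => h _; rewrite max_l.
by move=> h _; rewrite max_r // oppr_le0.
Qed.

Lemma gsum_le0 (g : G -> R) : (forall h, g h <= 0) ->
  gsum g = - fine (\esum_(h in [set: G]) (- g h)%:E).
Proof.
move=> g0; rewrite /gsum [X in fine X - _]esum1 ?sub0r.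
  by congr (- fine _); apply: eq_esum => h _; rewrite max_l // oppr_ge0.
by move=> h _; rewrite max_r.
Qed.
End Gs.


Section Fin.
Context {R : realType}.
Lemma fin_bound (E : \bar R) (r : R) : (0 <= E)%E -> (E <= r%:E)%E -> E \is a fin_num.
Proof. by case: E. Qed.
Lemma fine_bound (E : \bar R) (r : R) : (0 <= E)%E -> (E <= r%:E)%E -> fine E <= r.
Proof. by case: E. Qed.
Lemma esum_ge1 (T : choiceType) (a : T -> \bar R) t : (forall i, 0 <= a i)%E ->
  (a t <= \esum_(i in [set: T]) a i)%E.
Proof.
move=> a0; apply: esum_ge; exists [set t]; first by split => //; exact: finite_set1.
by rewrite fsbig_set1.
Qed.
Lemma max_id (x : R) : x + Num.max (- x) 0 = Num.max x 0.
Proof.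
have [h|h] := boolP (0 <= x).
  by rewrite (max_r (_ : - x <= 0)) ?oppr_le0 // max_l // addr0.
rewrite -ltNge in h.
rewrite (max_l (_ : 0 <= - x)) ?oppr_ge0 ?ltW // (max_r (_ : x <= 0)) ?ltW //.
by rewrite subrr.
Qed.
End Fin.

Section Meas.
Variables (R : realType) (G : groupType) (mu : G -> R).
Hypothesis mu0 : forall g, 0 <= mu g.
Hypothesis mu1 : (\esum_(h in [set: G]) (mu h)%:E = 1%E).

Lemma mu_le1 g : mu g <= 1.
Proof.
have := @esum_ge1 R G (fun h => (mu h)%:E) g; rewrite mu1 lee_fin; apply.
by move=> i; rewrite lee_fin.
Qed.

Lemma conv_pow_ge0 n g : 0 <= conv_pow mu n g.
Proof.
elim: n g => [|n IH] g /=; first by case: ifP.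
rewrite /conv_meas gsum_ge0; last by move=> h; apply: mulr_ge0.
by apply: fine_ge0; apply: esum_ge0 => h _; rewrite lee_fin mulr_ge0.
Qed.

Lemma conv_pow_esum n : (\esum_(g in [set: G]) (conv_pow mu n g)%:E <= 1)%E.
Proof.
elim: n => [|n IH] /=.
  rewrite (esumID [set 1%g]); last by move=> g _; rewrite lee_fin; case: ifP.
  rewrite setTI esum_set1; last by rewrite eqxx.
  rewrite esum1 ?adde0 ?eqxx // => g [_ /= ng].
  by case: eqP => // eg; case: ng; rewrite eg.
apply: (@le_trans _ _ (\esum_(g in [set: G]) \esum_(h in [set: G])
    (conv_pow mu n h * mu (h^-1 * g)%g)%:E)).
  apply: le_esum => g _; rewrite /conv_meas gsum_ge0; last first.
    by move=> h; apply: mulr_ge0 => //; exact: conv_pow_ge0.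
  by apply: fine_le_self; apply: esum_ge0 => h _; rewrite lee_fin mulr_ge0 // conv_pow_ge0.
rewrite esum_swap; last by move=> g h; rewrite lee_fin mulr_ge0 // conv_pow_ge0.
apply: le_trans IH; apply: le_esum => h _.
rewrite (eq_esum (b := fun g => ((conv_pow mu n h)%:E * (mu (h^-1 * g)%g)%:E)%E)); last by move=> g _; rewrite EFinM.
apply: le_trans; first by apply: esum_scale_le => //; [exact: conv_pow_ge0|move=> g; rewrite lee_fin].
rewrite -(reindex_esum [set: G] [set: G] (fun g => (h^-1 * g)%g) (fun j => (mu j)%:E)).
  by rewrite mu1 mule1.
split.
- by [].
- by move=> a b _ _ /mulgI.
- by move=> a _; exists (h * a)%g => //; rewrite mulKg.
Qed.

Lemma markov_le n (phi : G -> R) (M : R) x : 0 <= M -> (forall y, 0 <= phi y <= M) ->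
  markov_pow mu n phi x <= M.
Proof.
move=> M0 hphi; rewrite /markov_pow gsum_ge0; last first.
  by move=> h; apply: mulr_ge0; [exact: conv_pow_ge0|case/andP: (hphi (x * h)%g)].
apply: fine_bound; first by apply: esum_ge0 => h _; rewrite lee_fin mulr_ge0 ?conv_pow_ge0 //; case/andP: (hphi (x * h)%g).
apply: (@le_trans _ _ (\esum_(h in [set: G]) (M%:E * (conv_pow mu n h)%:E)%E)).
  apply: le_esum => h _; rewrite -EFinM lee_fin mulrC.
  by apply: (ler_wpM2r (conv_pow_ge0 n h)); case/andP: (hphi (x * h)%g).
apply: le_trans; first by apply: esum_scale_le => // g; rewrite lee_fin conv_pow_ge0.
have M0' : (0 <= M%:E)%E by rewrite lee_fin.
by have := lee_wpmul2l M0' (conv_pow_esum n); rewrite mule1.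
Qed.

Lemma step (g : G -> R) : (forall x, `|g x| <= 1) ->
  (forall x, conv_right g mu x = - g x) ->
  forall y s, mu s * (1 + g (y * s)%g) <= 1 - g y.
Proof.
move=> g1 hg y s.
pose phi := fun h => mu h * g (y * h)%g.
have phile h : `|phi h| <= mu h.
  by rewrite /phi normrM ger0_norm // ler_piMr.
have pP h : Num.max (phi h) 0 <= mu h.
  rewrite ge_max mu0 andbT; apply: le_trans (phile h); exact: ler_norm.
have pN h : Num.max (- phi h) 0 <= mu h.
  rewrite ge_max mu0 andbT; apply: le_trans (phile h); rewrite -normrN; exact: ler_norm.
pose EP := \esum_(h in [set: G]) (Num.max (phi h) 0)%:E.
pose EN := \esum_(h in [set: G]) (Num.max (- phi h) 0)%:E.
have EPle : (EP <= 1)%E by rewrite -mu1; apply: le_esum => h _; rewrite lee_fin.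
have ENle : (EN <= 1)%E by rewrite -mu1; apply: le_esum => h _; rewrite lee_fin.
have EP0 : (0 <= EP)%E by apply: esum_ge0 => h _; rewrite lee_fin le_max lexx orbT.
have EN0 : (0 <= EN)%E by apply: esum_ge0 => h _; rewrite lee_fin le_max lexx orbT.
have EPE : EP = (fine EP)%:E by rewrite fineK // (@fin_bound _ _ 1 EP0 EPle).
have ENE : EN = (fine EN)%:E by rewrite fineK // (@fin_bound _ _ 1 EN0 ENle).
have hgy : - g y = fine EP - fine EN by rewrite -hg.
pose psi := fun h => mu h * (1 + g (y * h)%g).
have psi0 h : 0 <= psi h.
  apply: mulr_ge0 => //; rewrite -lerBlDl sub0r; have := g1 (y * h)%g.
  by rewrite ler_norml => /andP[].
have key : (\esum_(h in [set: G]) (psi h)%:E + EN =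
            \esum_(h in [set: G]) (mu h)%:E + EP)%E.
  rewrite /EN /EP -esumD; last 2 first.
  - by move=> h _; rewrite lee_fin.
  - by move=> h _; rewrite lee_fin le_max lexx orbT.
  rewrite -esumD; last 2 first.
  - by move=> h _; rewrite lee_fin.
  - by move=> h _; rewrite lee_fin le_max lexx orbT.
  apply: eq_esum => h _; rewrite -!EFinD; congr (_%:E).
  rewrite -max_id /psi /phi; ring.
have hs : ((psi s)%:E <= \esum_(h in [set: G]) (psi h)%:E)%E.
  by apply: esum_ge1 => h; rewrite lee_fin.
have := leeD hs (lexx EN); rewrite key mu1 EPE ENE -!EFinD lee_fin.
rewrite /psi => H; have : psi s <= 1 + fine EP - fine EN by rewrite /psi; lra.
by rewrite /psi -addrA -hgy.
Qed.
End Meas.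


Section Walk.
Variables (R : realType) (G : groupType) (mu : G -> R).
Hypothesis mu0 : forall g, 0 <= mu g.
Hypothesis mu1 : (\esum_(h in [set: G]) (mu h)%:E = 1%E).

Lemma gsum_opp (phi : G -> R) : gsum (fun h => - phi h) = - gsum phi.
Proof.
rewrite /gsum opprB; congr (_ - _); congr fine; apply: eq_esum => h _.
by rewrite opprK.
Qed.

Lemma conv_right_opp (g : G -> R) x :
  conv_right (fun y => - g y) mu x = - conv_right g mu x.
Proof.
rewrite /conv_right -gsum_opp; congr gsum; apply: funext => h; by rewrite mulrN.
Qed.

Lemma walk (d : R) (l : seq G) : 0 < d -> (forall s, s \in l -> d <= mu s) ->
  forall g, (forall x, `|g x| <= 1) -> (forall x, conv_right g mu x = - g x) ->
  forall y, d ^+ size l * (1 - (-1) ^+ size l * g (y * prodl l)%g) <= 1 - g y.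
Proof.
move=> d0; elim: l => [|a l IH] hl g g1 hg y /=.
  by rewrite expr0 !mul1r mulg1.
have hl' : forall s, s \in l -> d <= mu s by move=> s hs; apply: hl; rewrite in_cons hs orbT.
have g1' : forall x, `|- g x| <= 1 by move=> x; rewrite normrN.
have hg' : forall x, conv_right (fun y => - g y) mu x = - - g x.
  by move=> x; rewrite conv_right_opp hg.
have IH' := IH hl' (fun x => - g x) g1' hg' (y * a)%g.
have hst := @step R G mu mu0 mu1 g g1 hg y a.
have hda : d <= mu a by apply: hl; rewrite mem_head.
have g0 : 0 <= 1 + g (y * a)%g.
  rewrite -lerBlDl sub0r; have := g1 (y * a)%g.
  by rewrite ler_norml => /andP[].
apply: (@le_trans _ _ (d * (1 + g (y * a)%g))); last first.
  by apply: le_trans hst; apply: ler_wpM2r.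
rewrite exprS -mulrA mulgA; apply: ler_wpM2l; first exact: ltW.
move: IH'; rewrite opprK exprS.
have -> : 1 - - 1 * (-1) ^+ size l * g (y * a * prodl l)%g =
          1 - (-1) ^+ size l * - g (y * a * prodl l)%g by ring.
by [].
Qed.
End Walk.


Definition Par {R : realType} {G : groupType} (mu : G -> R) (b : bool) (x : G) :=
  exists l : seq G, [/\ all (fun s => mu s != 0) l, odd (size l) = b & prodl l = x].

Theorem theorem4p4 (R : realType) (G : groupType) (mu f : G -> R) :
  countable [set: G] ->
  prob_measure mu -> symmetric_meas mu -> generating mu ->
  (forall x, `|f x| <= 1) ->
  (forall x, conv_right f mu x = - f x) ->
  (forall x, nondecreasing_seq (fun n => markov_pow mu n (fun y => `|f y|) x)) ->
  (forall x, (fun n => markov_pow mu n (fun y => `|f y|) x) @ \oo --> (1 : R)) ->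
  exists chi : G -> R,
    [/\ (forall x, chi x = 1 \/ chi x = -1),
        (forall x y, chi (x * y)%g = chi x * chi y),
        (forall h, mu h != 0 -> chi h = -1) &
        (forall x, conv_right chi mu x = - chi x)].
Proof.
move=> _ [mu0 mu1] msym mgen f1 hf _ hlim.
have delta_ex : forall l : seq G, all (fun s => mu s != 0) l ->
    exists d : R, [/\ 0 < d, d <= 1 & forall s, s \in l -> d <= mu s].
  elim=> [|a l IH] /=; first by move=> _; exists 1; split => //.
  move=> /andP[ha hl]; have [d [d0 d1 hd]] := IH hl.
  have ma : 0 < mu a by rewrite lt_def ha mu0.
  exists (Num.min (mu a) d); split.
  - by rewrite lt_min ma d0.
  - by rewrite ge_min d1 orbT.
  - move=> s; rewrite in_cons => /orP[/eqP ->|hs]; first by rewrite ge_min lexx.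
    by rewrite ge_min hd ?orbT.
have noodd : forall l : seq G, all (fun s => mu s != 0) l -> odd (size l) ->
    prodl l = 1%g -> False.
  move=> l hl hodd hp; have [d [d0 d1 hd]] := delta_ex l hl.
  pose c := d ^+ size l.
  have c0 : 0 < c by rewrite exprn_gt0.
  have c1 : c <= 1 by rewrite exprn_ile1 // ltW.
  have bnd : forall g : G -> R, (forall x, `|g x| <= 1) ->
      (forall x, conv_right g mu x = - g x) -> forall y, g y <= 1 - c.
    move=> g g1 hg y; have := @walk R G mu mu0 mu1 d l d0 hd g g1 hg y.
    rewrite hp mulg1 -signr_odd hodd expr1 -/c => H.
    have := g1 y; rewrite ler_norml => /andP[gl gu].
    have [gp|gn] := boolP (0 <= g y).
      have : 0 <= c * g y by rewrite mulr_ge0 // ltW.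
      move=> cg; lra.
    rewrite -ltNge in gn; lra.
  have fb : forall y, 0 <= `|f y| <= 1 - c.
    move=> y; rewrite normr_ge0 /= ler_norml; apply/andP; split.
      rewrite lerNl; apply: (bnd (fun x => - f x)).
      - by move=> x; rewrite normrN.
      - by move=> x; rewrite conv_right_opp hf.
    exact: bnd.
  have M0 : 0 <= 1 - c by rewrite subr_ge0.
  have : 1 <= 1 - c.
    apply: (cvgr_to_le (hlim 1%g)); apply: nearW => n.
    exact: (@markov_le R G mu mu0 mu1 n _ _ 1%g M0 fb).
  lra.
have Parity : forall x, exists b, Par mu b x.
  pose H := fun x => exists b, Par mu b x.
  suff : H = [set: G] by move=> e x; have : H x by rewrite e.
  apply: mgen.
  - by exists false, [::].
  - move=> x y [b1 [l1 [a1 o1 p1]]] [b2 [l2 [a2 o2 p2]]].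
    exists (b1 (+) b2), (l1 ++ l2); split.
    + by rewrite all_cat a1 a2.
    + by rewrite size_cat oddD o1 o2.
    + by rewrite prodl_cat p1 p2.
  - move=> x [b [l [a o p]]]; exists b, (invl l); split.
    + by apply: all_invl a => s /=; rewrite -msym.
    + by rewrite size_invl.
    + by rewrite prodl_invl p.
  - move=> h /= hh; exists true, [:: h]; split => //=.
    + by rewrite hh.
    + by rewrite mulg1.
have Puniq : forall b1 b2 x, Par mu b1 x -> Par mu b2 x -> b1 = b2.
  move=> b1 b2 x [l1 [a1 o1 p1]] [l2 [a2 o2 p2]].
  have : ~~ (b1 (+) b2).
    apply/negP => hodd; apply: (noodd (l1 ++ invl l2)).
    + rewrite all_cat a1 /=; apply: all_invl a2 => s /=; by rewrite -msym.
    + by rewrite size_cat oddD size_invl o1 o2.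
    + by rewrite prodl_cat prodl_invl p1 p2 mulgV.
  by case: b1 {o1} ; case: b2 {o2}.
have PM : forall b1 b2 x y, Par mu b1 x -> Par mu b2 y -> Par mu (b1 (+) b2) (x * y)%g.
  move=> b1 b2 x y [l1 [a1 o1 p1]] [l2 [a2 o2 p2]].
  exists (l1 ++ l2); split.
  + by rewrite all_cat a1 a2.
  + by rewrite size_cat oddD o1 o2.
  + by rewrite prodl_cat p1 p2.
pose chi := fun x => if `[< Par mu true x >] then -1 else (1 : R).
have chiE : forall b x, Par mu b x -> chi x = if b then -1 else 1.
  move=> b x hb; rewrite /chi; case: asboolP => h.
    by rewrite -(Puniq _ _ _ h hb).
  by case: b hb => // hb.
have chiM : forall x y, chi (x * y)%g = chi x * chi y.
  move=> x y; have [bx px] := Parity x; have [b' py] := Parity y.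
  rewrite (chiE _ _ (PM _ _ _ _ px py)) (chiE _ _ px) (chiE _ _ py).
  by case: bx {px}; case: b' {py} => /=; rewrite ?mulrNN ?mulr1 ?mulN1r ?mulrN1.
have chis : forall h, mu h != 0 -> chi h = -1.
  move=> h hh; apply: (chiE true); exists [:: h]; split => //=.
  + by rewrite hh.
  + by rewrite mulg1.
exists chi; split => //.
- by move=> x; rewrite /chi; case: asboolP => _; [right|left].
- move=> x.
  have e : (fun h => mu h * chi (x * h)%g) = (fun h => mu h * - chi x).
    apply: funext => h; have [->|hh] := eqVneq (mu h) 0; first by rewrite !mul0r.
    by rewrite chiM (chis h hh) mulrN1.
  rewrite /conv_right e.
  have [cx|cx] : chi x = 1 \/ chi x = -1 by rewrite /chi; case: asboolP => _; [right|left].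
  + rewrite cx gsum_le0; last by move=> h; rewrite mulrN1 oppr_le0.
    congr (- _).
    rewrite (eq_esum (b := fun h => (mu h)%:E)); last by move=> h _; rewrite mulrN1 opprK.
    by rewrite mu1.
  + rewrite cx opprK gsum_ge0; last by move=> h; rewrite mulr1.
    rewrite (eq_esum (b := fun h => (mu h)%:E)); last by move=> h _; rewrite mulr1.
    by rewrite mu1.
Qed.
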